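(* Let $n\ge5$. (a) Let $Y=Y^{(n)}=(Y_{n+1},Y_n,\ldots,Y_1)$ be a $\{0,1\}$-valued Markov chain (run in the order $Y_{n+1},\ldots,Y_1$) with $Y_{n+1}=1$, transition probabilities $\mathbb{P}(Y_i=0\mid Y_{i+1}=0)=p_i$, $\mathbb{P}(Y_i=1\mid Y_{i+1}=0)=q_i=1-p_i$, $\mathbb{P}(Y_i=0\mid Y_{i+1}=1)=1$ for $i=3,\ldots,n$, where $p_i\in(0,1)$, and with $Y_2=0$, $Y_1=1$ almost surely; set $p_2:=1$. Assume $\frac{p_iq_{i-1}}{p_{i-2}q_i}>1$ for every $4\le i\le n-1$. Then, writing $Y$ also for $(Y_n,\ldots,Y_1)$, $$\mathbb{P}(Y\in\Lambda_2(n))>\mathbb{P}(Y\in\Lambda_1(n)).$$ (b) Let $\theta>0$ and let $\eta=(\eta_n,\ldots,\eta_1)$ have the law of $(\xi_n,\ldots,\xi_1)$ conditioned on $(\xi_n,\ldots,\xi_1)\in\Delta_n$. Then $\mathbb{P}(\eta\in\Lambda_2(n))>\mathbb{P}(\eta\in\Lambda_1(n))$, and $$\mathbb{P}(\eta\in\Lambda_2(n))=\sum_{r\in\Lambda_1(n)}\left(\prod_{i=1}^{|r|-1}\frac{\sigma_i(r)-1}{n+1-\sigma_i(r)}\right)\mathbb{P}(\eta=r).$$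
   Context: Let $\xi_1,\xi_2,\ldots$ be independent Bernoulli random variables with $\mathbb{P}(\xi_i=1)=\theta/(\theta+i-1)$, $\mathbb{P}(\xi_i=0)=(i-1)/(\theta+i-1)$. For $n\ge2$, $\Delta_n$ is the set of $(a_n,a_{n-1},\ldots,a_1)\in\{0,1\}^n$ with $a_n=0$, $a_1=1$, and no index $2\le i\le n$ with $a_i=a_{i-1}=1$. For $r=(r_n,\ldots,r_1)\in\Delta_n$, $|r|$ denotes the number of indices $i$ with $r_i=1$. Set $\sigma_0(r)=n+1$, and for $j=1,\ldots,|r|$ let $\sigma_j(r)$ be the largest index $i<\sigma_{j-1}(r)$ with $r_i=1$ (so $\sigma_{|r|}(r)=1$). The numbers $\sigma_{l-1}(r)-\sigma_l(r)$, $l=1,\ldots,|r|$, are the successive spacings (cycle lengths). $r\in\Delta_n$ is weakly increasing if $\sigma_{l-1}(r)-\sigma_l(r)\le\sigma_l(r)-\sigma_{l+1}(r)$ for all $l=1,\ldots,|r|-1$, and weakly decreasing if $\sigma_{l-1}(r)-\sigma_l(r)\ge\sigma_l(r)-\sigma_{l+1}(r)$ for all such $l$. $\Lambda_1(n)$ (resp. $\Lambda_2(n)$) is the set of weakly increasing (resp. weakly decreasing) elements of $\Delta_n$. *)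

(* Defs.v *)
From HB Require Import structures.
From mathcomp Require Import all_boot all_order all_algebra.
From mathcomp Require Import reals.
Set Implicit Arguments. Unset Strict Implicit. Unset Printing Implicit Defensive.
Import Order.TTheory GRing.Theory Num.Theory.

(* A vector (a_n, ..., a_1) in {0,1}^n is encoded as r : {ffun 'I_n -> bool},
   with a_i = r (i-1) (true = 1).  [bit r i] is a_i for 1 <= i <= n,
   and false for any other index. *)
Section Vectors.
Variable n : nat.
Implicit Type r : {ffun 'I_n -> bool}.

Definition bit r (i : nat) : bool := [exists j : 'I_n, (j.+1 == i) && r j].

Definition inDelta r : bool :=
  [&& ~~ bit r n, bit r 1 &
      all (fun i => ~~ (bit r i && bit r i.-1)) (iota 2 n.-1)].

Definition weight r : nat := \sum_(j < n) (r j : nat).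

Fixpoint sigma r (j : nat) : nat :=
  match j with
  | 0 => n.+1
  | j'.+1 => \max_(i < sigma r j' | bit r i) (i : nat)
  end.

Definition weakly_increasing r : bool :=
  all (fun l => sigma r l.-1 - sigma r l <= sigma r l - sigma r l.+1)
      (iota 1 (weight r).-1).

Definition weakly_decreasing r : bool :=
  all (fun l => sigma r l.-1 - sigma r l >= sigma r l - sigma r l.+1)
      (iota 1 (weight r).-1).

Definition Lambda1 r : bool := inDelta r && weakly_increasing r.
Definition Lambda2 r : bool := inDelta r && weakly_decreasing r.
End Vectors.

Local Open Scope ring_scope.

Definition markov_trans (R : realType) (p : nat -> R) (i : nat)
  (prev cur : bool) : R :=
  if prev then (if cur then 0 else 1)
  else (if cur then 1 - p i else p i).

Definition markovP (R : realType) (n : nat) (p : nat -> R)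
  (r : {ffun 'I_n -> bool}) : R :=
  (\prod_(3 <= i < n.+1)
     markov_trans p i (if i.+1 == n.+1 then true else bit r i.+1) (bit r i))
  * (if bit r 2 then 0 else 1) * (if bit r 1 then 1 else 0).

Definition xiP (R : realType) (n : nat) (theta : R)
  (r : {ffun 'I_n -> bool}) : R :=
  \prod_(1 <= i < n.+1)
     (if bit r i then theta / (theta + i%:R - 1)
      else (i%:R - 1) / (theta + i%:R - 1)).

Definition etaP (R : realType) (n : nat) (theta : R)
  (r : {ffun 'I_n -> bool}) : R :=
  if inDelta r then
    xiP theta r / (\sum_(s : {ffun 'I_n -> bool} | inDelta s) xiP theta s)
  else 0.

(* Main.v *)
Require Import Defs.
From HB Require Import structures.
From mathcomp Require Import all_boot all_order all_algebra.
From mathcomp Require Import reals.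
From mathcomp Require Import ring lra zify.
Import Order.TTheory GRing.Theory Num.Theory.
Set Implicit Arguments. Unset Strict Implicit. Unset Printing Implicit Defensive.

Section Comb.
Variable n : nat.
Implicit Type r : {ffun 'I_n -> bool}.

Lemma bit_ord r (j : 'I_n) : bit r j.+1 = r j.
Proof.
apply/existsP/idP => [[k /andP[/eqP kj rk]]|rj]; last by exists j; rewrite eqxx.
by have -> : j = k by apply/val_inj; case: kj.
Qed.

Lemma bit_range r i : bit r i -> 0 < i <= n.
Proof.
by case/existsP => k /andP[/eqP <- _]; rewrite ltn_ord.
Qed.

Lemma bit_ffun (P : nat -> bool) i :
  bit [ffun j : 'I_n => P j] i = (0 < i <= n) && P i.-1.
Proof.
apply/existsP/idP => [[k /andP[/eqP <- ]]|/andP[/andP[i0 iN] Pi]].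
  by rewrite ffunE ltn_ord.
have lt : i.-1 < n by lia.
by exists (Ordinal lt); rewrite ffunE /= Pi andbT; apply/eqP; lia.
Qed.

Lemma sigma_S r j : sigma r j.+1 = \max_(i < sigma r j | bit r i) (i : nat).
Proof. by []. Qed.

Lemma sigma_le r j : sigma r j.+1 <= (sigma r j).-1.
Proof.
rewrite sigma_S; apply/bigmax_leqP => i _; have := ltn_ord i; lia.
Qed.

Lemma sigma_bound r j : sigma r j <= n.+1 - j.
Proof.
elim: j => [|j IH]; first by rewrite subn0.
have := sigma_le r j; lia.
Qed.

Lemma sigma_ge r j i : bit r i -> i < sigma r j -> i <= sigma r j.+1.
Proof.
move=> bi lt; rewrite sigma_S.
exact: (@leq_bigmax_cond _ (fun k : 'I_(sigma r j) => bit r k) (fun k => nat_of_ord k) (Ordinal lt)).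
Qed.

Lemma sigma_bit r j : bit r 1 -> 1 < sigma r j ->
  bit r (sigma r j.+1) && (0 < sigma r j.+1).
Proof.
move=> b1 lt; rewrite sigma_S.
have P0 : bit r (Ordinal lt) by [].
case: (@eq_bigmax_cond _ (fun k : 'I_(sigma r j) => bit r k) (fun k => nat_of_ord k)) => [|i bi E].
  by apply/card_gt0P; exists (Ordinal lt).
rewrite E; have bi2 : bit r i := bi; rewrite bi2 /=.
have := @leq_bigmax_cond _ (fun k : 'I_(sigma r j) => bit r k) (fun k => nat_of_ord k) _ P0.
rewrite E /=; lia.
Qed.

Lemma mono_lt (t : nat -> nat) m :
  (forall j, j < m -> t j.+1 < t j) -> forall a b, a < b <= m -> t b < t a.
Proof.
move=> H a b; elim: b => [|b IH] /andP[ab bm]; first lia.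
case: (ltngtP a b) => [ab'|ba|<-]; last (by apply: H; lia); last lia.
have := H b ltac:(lia); have := IH ltac:(lia); lia.
Qed.

Lemma mono_le (t : nat -> nat) m :
  (forall j, j < m -> t j.+1 < t j) -> forall a b, a <= b <= m -> t b <= t a.
Proof.
move=> H a b /andP[ab bm]; case: (ltngtP a b) => [ab'|ba|<-//]; last lia.
have := @mono_lt t m H a b; lia.
Qed.

Lemma perm_filter_iota (L : seq nat) a b : uniq L ->
  perm_eq [seq i <- index_iota a b | i \in L] [seq x <- L | a <= x < b].
Proof.
move=> uL; apply: uniq_perm; rewrite ?filter_uniq ?iota_uniq //.
by move=> x; rewrite !mem_filter mem_index_iota andbC.
Qed.

Lemma uniq_map_mono (t : nat -> nat) m :
  (forall j, j < m -> t j.+1 < t j) -> uniq [seq t j | j <- iota 1 m].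
Proof.
move=> H; rewrite map_inj_in_uniq ?iota_uniq // => a b.
rewrite !mem_iota => Ha Hb E; apply/eqP; rewrite eqn_leq; apply/andP; split;
  rewrite leqNgt; apply/negP => lt.
- have := @mono_lt t m H b a; lia.
- have := @mono_lt t m H a b; lia.
Qed.

Definition bits_ok r (t : nat -> nat) m :=
  forall i, 0 < i <= n -> bit r i = has (fun j => t j == i) (iota 1 m).

Lemma bit_mem r t m : bits_ok r t m ->
  forall i, bit r i = (0 < i <= n) && (i \in [seq t j | j <- iota 1 m]).
Proof.
move=> H i; case: (boolP (0 < i <= n)) => iin /=.
  rewrite H //; apply/hasP/mapP.
    by move=> -[j ji /eqP E]; exists j.
  by move=> -[j ji E]; exists j => //; rewrite E.
by apply/negbTE; apply: contra iin; apply: bit_range.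
Qed.

Lemma weight_count r t m :
  (forall j, j < m -> t j.+1 < t j) ->
  (forall j, 0 < j <= m -> 0 < t j <= n) -> bits_ok r t m -> weight r = m.
Proof.
move=> Hd Hr Hb.
have -> : weight r = (\sum_(1 <= i < n.+1) bit r i)%N.
  rewrite big_add1 /= big_mkord /weight; apply: eq_bigr => i _; by rewrite bit_ord.
set L := [seq t j | j <- iota 1 m].
have uL : uniq L by apply: uniq_map_mono.
transitivity (\sum_(1 <= i < n.+1 | i \in L) 1)%N.
  rewrite [RHS]big_mkcond /=; apply: eq_big_nat => i /andP[i1 i2].
  rewrite (bit_mem Hb); have -> : (0 < i <= n) = true by apply/andP; lia.
  by rewrite /=; case: (i \in L).
rewrite -big_filter (perm_big _ (perm_filter_iota 1 n.+1 uL)) big_filter sum1_count.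
rewrite (@eq_in_count _ _ predT); first by rewrite count_predT size_map size_iota.
move=> x /mapP[j]; rewrite mem_iota => jr ->; have := Hr j ltac:(lia); rewrite /=; lia.
Qed.

Lemma sigma0 r : sigma r 0 = n.+1.
Proof. by []. Qed.

Lemma sigma_char r t m : t 0 = n.+1 -> (forall j, j < m -> t j.+1 < t j) ->
  0 < t m -> bits_ok r t m ->
  (forall j, j <= m -> sigma r j = t j) /\ weight r = m.
Proof.
move=> t0 Hd tm Hb.
have Hr : forall j, 0 < j <= m -> 0 < t j <= n.
  move=> j jr; have := @mono_le t m Hd j m; have := @mono_le t m Hd 1 j.
  have := Hd 0 ltac:(lia); lia.
split; last exact: weight_count Hd Hr Hb.
elim => [|j IH] jm; first by rewrite sigma0 t0.
have sj := IH (ltnW jm).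
apply/eqP; rewrite eqn_leq; apply/andP; split.
  rewrite sigma_S; apply/bigmax_leqP => i bi.
  have ilt : (i : nat) < t j by rewrite -sj ltn_ord.
  move: bi; rewrite (bit_mem Hb) => /andP[_ /mapP[j' j'in E]].
  rewrite E in ilt *; move: j'in; rewrite mem_iota => j'r.
  have jj' : j < j'.
    rewrite ltnNge; apply/negP => jle; have := @mono_le t m Hd j' j; lia.
  have := @mono_le t m Hd j.+1 j'; lia.
apply: sigma_ge; last by rewrite sj; apply: Hd.
rewrite (bit_mem Hb); apply/andP; split; first by apply: Hr; lia.
by apply/mapP; exists j.+1 => //; rewrite mem_iota; lia.
Qed.

Lemma sigma_struct r : 0 < n -> bit r 1 ->
  [/\ 0 < weight r, (forall j, j < weight r -> sigma r j.+1 < sigma r j),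
      sigma r (weight r) = 1 & bits_ok r (sigma r) (weight r)].
Proof.
move=> n0 b1.
have ex : exists j, sigma r j <= 1 by exists n; have := sigma_bound r n; lia.
case: (ex_minnP ex) => m Pm minm.
have m0 : 0 < m.
  by case: m Pm minm => // ; rewrite sigma0; lia.
have lt1 : forall j, j < m -> 1 < sigma r j.
  move=> j jm; rewrite ltnNge; apply/negP => h; have := minm j h; lia.
have dec : forall j, j < m -> sigma r j.+1 < sigma r j.
  move=> j jm; have := sigma_le r j; have := lt1 j jm; lia.
have sm : sigma r m = 1.
  case: m Pm minm m0 lt1 dec => // m' Pm _ _ lt1 _.
  have /andP[_ h] := sigma_bit b1 (lt1 m' (ltnSn _)); lia.
have bok : bits_ok r (sigma r) m.
  move=> i /andP[i0 iN]; apply/idP/hasP.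
    move=> bi.
    have cross : forall j, j <= m -> i < sigma r j \/
        exists2 j', j' < j & sigma r j'.+1 <= i < sigma r j'.
      elim => [|j IH] jm; first by left; rewrite sigma0; lia.
      case: (IH (ltnW jm)) => [lt|[j' j'j H]]; last by right; exists j' => //; lia.
      case: (ltnP i (sigma r j.+1)) => h; first by left.
      by right; exists j; lia.
    case: (cross m (leqnn m)) => [|[j' j'm /andP[h1 h2]]]; first by rewrite sm; lia.
    have := sigma_ge bi h2 => h3.
    by exists j'.+1; [rewrite mem_iota; lia | apply/eqP; lia].
  move=> [j]; rewrite mem_iota => jr /eqP E.
  case: j jr E => [|j0] jr E; first lia.
  have /andP[] := sigma_bit b1 (lt1 j0 ltac:(lia)); by rewrite E.
have Hr : forall j, 0 < j <= m -> 0 < sigma r j <= n.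
  move=> j jr; have := @mono_le (sigma r) m dec j m; have := @mono_le (sigma r) m dec 1 j.
  have := dec 0 ltac:(lia); rewrite sigma0; lia.
have w := weight_count dec Hr bok.
by rewrite w; split.
Qed.

Definition revo (j : 'I_n) : 'I_n := if (j : nat) == 0 then j else insubd j (n - j).
Definition revf r : {ffun 'I_n -> bool} := [ffun j => r (revo j)].

Lemma revo_val j : (revo j : nat) = if (j : nat) == 0 then 0 else n - j.
Proof.
rewrite /revo; case: eqP => [->//|jn0]; rewrite val_insubd.
have := ltn_ord j; case: ifP => // /negbT; lia.
Qed.

Lemma revoK : involutive revo.
Proof.
move=> j; apply: ord_inj; rewrite !revo_val.
have := ltn_ord j; case: (eqVneq (j : nat) 0) => [->//|j0] lt.
have -> : (n - j == 0) = false by apply/eqP; lia.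
lia.
Qed.

Lemma revfK : involutive revf.
Proof. by move=> r; apply/ffunP => j; rewrite !ffunE revoK. Qed.

Lemma revf_inj : injective revf.
Proof. exact: inv_inj revfK. Qed.

Lemma bit_rev1 r : 0 < n -> bit (revf r) 1 = bit r 1.
Proof.
move=> n0; rewrite -[1]/((Ordinal n0).+1) !bit_ord ffunE.
by congr (r _); apply: ord_inj; rewrite revo_val.
Qed.

Lemma bit_rev r i : 2 <= i <= n -> bit (revf r) i = bit r (n.+2 - i).
Proof.
move=> ir; have lt : i.-1 < n by lia.
have E1 : i = (Ordinal lt).+1 by rewrite /=; lia.
have lt2 : n - i.-1 < n by lia.
have E2 : n.+2 - i = (Ordinal lt2).+1 by rewrite /=; lia.
rewrite E2 {1}E1 !bit_ord ffunE; congr (r _); apply: ord_inj.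
rewrite revo_val /=; case: eqP => //; lia.
Qed.

Lemma delta_noadj r i : inDelta r -> 2 <= i <= n -> ~~ (bit r i && bit r i.-1).
Proof.
by move/and3P=> [_ _ /allP H] ir; apply: H; rewrite mem_iota; lia.
Qed.

Lemma delta_b1 r : inDelta r -> bit r 1.
Proof. by case/and3P. Qed.

Lemma delta_bn r : inDelta r -> bit r n = false.
Proof. by case/and3P => /negbTE. Qed.

Lemma delta_b2 r : 1 < n -> inDelta r -> bit r 2 = false.
Proof.
move=> n1 D; have := delta_noadj D (i:=2) ltac:(lia).
by rewrite /= delta_b1 // andbT => /negbTE.
Qed.

Lemma delta_rev r : 1 < n -> inDelta r -> inDelta (revf r).
Proof.
move=> n1 D; apply/and3P; split.
- rewrite bit_rev; last lia.
  rewrite (_ : n.+2 - n = 2); last lia.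
  by rewrite delta_b2.
- rewrite bit_rev1; last lia.
  exact: delta_b1.
- apply/allP => i; rewrite mem_iota => ir.
  have [i2|i2] : i = 2 \/ 2 < i by lia.
    subst i; rewrite [bit _ 2.-1]bit_rev1; last lia.
    rewrite (@bit_rev r 2); last lia.
    rewrite (_ : n.+2 - 2 = n); last lia.
    by rewrite delta_bn.
  rewrite (@bit_rev r i); last lia.
  rewrite (@bit_rev r i.-1); last lia.
  have := delta_noadj D (i := n.+3 - i) ltac:(lia).
  rewrite (_ : (n.+3 - i).-1 = n.+2 - i); last lia.
  rewrite (_ : n.+2 - i.-1 = n.+3 - i); last lia.
  by rewrite andbC.
Qed.

Lemma delta_rev_eq r : 1 < n -> inDelta (revf r) = inDelta r.
Proof.
move=> n1; apply/idP/idP; last exact: delta_rev.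
by move/(delta_rev n1); rewrite revfK.
Qed.

Lemma delta_range r : 1 < n -> inDelta r -> forall j, 0 < j < weight r ->
  3 <= sigma r j <= n.-1.
Proof.
move=> n1 D j jr.
have [k0 dec sk bok] := sigma_struct (ltnW n1) (delta_b1 D).
have H1 := @mono_lt (sigma r) _ dec j (weight r) ltac:(lia).
have H2 := @mono_lt (sigma r) _ dec 0 j ltac:(lia).
rewrite sk sigma0 in H1 H2.
have bj : bit r (sigma r j).
  rewrite bok; last lia.
  by apply/hasP; exists j; rewrite ?mem_iota //; lia.
have : sigma r j != n by apply: contraTneq bj => ->; rewrite delta_bn.
have : sigma r j != 2 by apply: contraTneq bj => ->; rewrite delta_b2.
lia.
Qed.

Lemma sigma_rev r : 1 < n -> inDelta r ->
  weight (revf r) = weight r /\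
  forall j, j <= weight r -> sigma (revf r) j = n.+2 - sigma r (weight r - j).
Proof.
move=> n1 D; set k := weight r.
have [k0 dec sk bok] := sigma_struct (ltnW n1) (delta_b1 D).
have bnd : forall j, sigma r j <= n.+1 by move=> j; have := sigma_bound r j; lia.
have c1 : (fun j => n.+2 - sigma r (k - j)) 0 = n.+1 by rewrite /= subn0 sk; lia.
have c2 : forall j, j < k -> (fun j => n.+2 - sigma r (k - j)) j.+1 < (fun j => n.+2 - sigma r (k - j)) j.
  move=> j jk /=; have h := dec (k - j.+1) ltac:(lia).
  rewrite (_ : (k - j.+1).+1 = k - j) in h; last lia.
  have := bnd (k - j.+1); lia.
have c3 : 0 < (fun j => n.+2 - sigma r (k - j)) k by rewrite /= subnn sigma0; lia.
have c4 : bits_ok (revf r) (fun j => n.+2 - sigma r (k - j)) k.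
  move=> i /andP[i0 iN].
  case: (ltngtP i 1) => [|i1|i1]; first lia; last first.
    subst i; rewrite bit_rev1 ?(delta_b1 D); last lia.
    by symmetry; apply/hasP; exists k; [rewrite mem_iota; lia| rewrite subnn sigma0; apply/eqP; lia].
  rewrite bit_rev; last lia.
  rewrite bok; last lia.
  apply/hasP/hasP => -[j]; rewrite mem_iota => jr /eqP E.
    have jk : j != k by apply/eqP => jk; move: E; rewrite jk sk; lia.
    exists (k - j); first by rewrite mem_iota; lia.
    by rewrite (_ : k - (k - j) = j); [apply/eqP; lia | lia].
  have jk : j != k by apply/eqP => jk; move: E; rewrite jk subnn sigma0; lia.
  exists (k - j); first by rewrite mem_iota; lia.
  by apply/eqP; have := bnd (k - j); lia.
have [H1 H2] := sigma_char c1 c2 c3 c4.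
by split.
Qed.

Ltac wk_tac r k l bnd :=
  have e1 : sigma r (k - (k - l).-1) = sigma r l.+1; [by congr sigma; lia|];
  have e2 : sigma r (k - (k - l)) = sigma r l; [by congr sigma; lia|];
  have e3 : sigma r (k - (k - l).+1) = sigma r l.-1; [by congr sigma; lia|];
  have e4 : sigma r (k - l.-1) = sigma r (k - l).+1; [by congr sigma; lia|];
  have e5 : sigma r (k - l.+1) = sigma r (k - l).-1; [by congr sigma; lia|];
  have := bnd l; have := bnd l.-1; have := bnd l.+1;
  have := bnd (k - l); have := bnd (k - l).-1; have := bnd (k - l).+1; lia.

Lemma weak_rev r : 1 < n -> inDelta r ->
  weakly_decreasing (revf r) = weakly_increasing r /\
  weakly_increasing (revf r) = weakly_decreasing r.
Proof.
move=> n1 D; have [w E] := sigma_rev n1 D.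
rewrite /weakly_decreasing /weakly_increasing w; set k := weight r in E *.
have bnd : forall j, sigma r j <= n.+1 by move=> j; have := sigma_bound r j; lia.
split; apply/allP/allP => H l; rewrite mem_iota => lr;
  have := H (k - l) ltac:(rewrite mem_iota; lia);
  rewrite ?E; try lia; wk_tac r k l bnd.
Qed.

Lemma Lambda_rev r : 1 < n ->
  Lambda2 (revf r) = Lambda1 r /\ Lambda1 (revf r) = Lambda2 r.
Proof.
move=> n1; rewrite /Lambda1 /Lambda2 delta_rev_eq //.
case: (boolP (inDelta r)) => D //=.
by have [-> ->] := weak_rev n1 D.
Qed.

End Comb.

Lemma sum_L2 (R : nmodType) n (F : {ffun 'I_n -> bool} -> R) : 1 < n ->
  (\sum_(r | Lambda2 r) F r = \sum_(r | Lambda1 r) F (revf r))%R.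
Proof.
move=> n1; rewrite (reindex_inj (@revf_inj n)); apply: eq_bigl => r.
by have [-> _] := Lambda_rev r n1.
Qed.

Section Concave.
Variable n : nat.
Implicit Type r : {ffun 'I_n -> bool}.

Lemma concave r : 1 < n -> inDelta r -> weakly_increasing r ->
  forall j, 0 < j < weight r -> n.+2 <= sigma r j + sigma r (weight r - j).
Proof.
move=> n1 D wi j jr; set k := weight r in jr *.
have [k0 dec sk bok] := sigma_struct (ltnW n1) (delta_b1 D).
rewrite -/k in dec sk.
pose d l := sigma r l.-1 - sigma r l.
have dmono1 : forall l, 0 < l < k -> d l <= d l.+1.
  move=> l lr; move/allP: wi => /(_ l); rewrite mem_iota => /(_ ltac:(lia)).
  by rewrite /d.
have dmono : forall a e, 0 < a -> a + e <= k -> d a <= d (a + e).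
  move=> a; elim => [|e IH] a0 ae; first by rewrite addn0.
  have := IH a0 ltac:(lia); have := dmono1 (a + e) ltac:(lia).
  rewrite addnS; lia.
have tele : forall c e, c + e <= k -> sigma r c - sigma r (c + e) = (\sum_(i < e) d (c + i.+1))%N.
  move=> c; elim => [|e IH] ce; first by rewrite big_ord0 addn0 subnn.
  rewrite big_ord_recr /= -IH; last lia.
  have := dec (c + e) ltac:(lia); have := @mono_le (sigma r) k dec c (c + e) ltac:(lia).
  rewrite /d addnS /=; lia.
have h1 := tele 0 (k - j) ltac:(lia).
have h2 := tele j (k - j) ltac:(lia).
have : (\sum_(i < k - j) d (0 + i.+1) <= \sum_(i < k - j) d (j + i.+1))%N.
  apply: leq_sum => i _; rewrite add0n.
  have := dmono i.+1 j ltac:(lia) ltac:(have := ltn_ord i; lia).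
  by rewrite addnC.
rewrite -h1 -h2 add0n (_ : j + (k - j) = k); last lia.
rewrite sk sigma0.
have := @mono_le (sigma r) k dec 0 (k - j) ltac:(lia).
have := @mono_le (sigma r) k dec j k ltac:(lia).
rewrite sk sigma0; lia.
Qed.

End Concave.


Section Real.
Variable R : realType.
Variable n : nat.
Hypothesis n4 : (4 < n)%N.
Implicit Type r : {ffun 'I_n -> bool}.

Lemma n1 : (1 < n)%N. Proof. lia. Qed.

Lemma prod_bits r (h : nat -> R) a : inDelta r -> (2 <= a <= 3)%N ->
  (\prod_(a <= i < n.+1) (if bit r i then h i else 1) =
  \prod_(1 <= j < weight r) h (sigma r j))%R.
Proof.
move=> D ar; set k := weight r.
have [k0 dec sk bok] := sigma_struct (ltnW n1) (delta_b1 D).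
rewrite -/k in dec sk bok.
set L := [seq sigma r j | j <- iota 1 k].
have uL : uniq L by apply: uniq_map_mono.
rewrite -big_mkcond big_nat_cond.
transitivity (\prod_(a <= i < n.+1 | i \in L) h i)%R.
  rewrite [RHS]big_nat_cond; apply: eq_bigl => i.
  rewrite (bit_mem bok); case: (boolP ((a <= i < n.+1)%N)) => //= ir.
  by rewrite (_ : (0 < i <= n)%N = true) //; apply/andP; lia.
rewrite -big_filter (perm_big _ (perm_filter_iota a n.+1 uL)) big_filter big_map.
have -> : iota 1 k = index_iota 1 k.+1 by rewrite /index_iota subn1.
rewrite big_mkcond big_nat_recr /=; last lia.
rewrite sk (_ : (a <= 1)%N = false) /=; last lia.
rewrite mulr1; apply: eq_big_nat => j jr.
have := delta_range n1 D (j := j) ltac:(lia).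
by move=> h3; rewrite (_ : (a <= sigma r j < n.+1)%N = true) //; apply/andP; lia.
Qed.

Definition r0 : {ffun 'I_n -> bool} := [ffun j : 'I_n => ((j : nat) == 0%N) || ((j : nat) == (n - 2)%N)].

Lemma bit_r0 i : bit r0 i = (i == 1%N) || (i == n.-1).
Proof.
rewrite /r0 (@bit_ffun n (fun x => (x == 0%N) || (x == (n - 2)%N))).
case: (boolP (0 < i <= n)%N) => i0 /=.
  by do ! (case: eqP => ?); rewrite //=; exfalso; lia.
by do ! (case: eqP => ?); rewrite //=; exfalso; move: i0; lia.
Qed.

Lemma sigma_r0 : weight r0 = 2%N /\ sigma r0 1 = n.-1 /\ sigma r0 2 = 1%N.
Proof.
pose t := fun j : nat => if j == 0%N then n.+1 else if j == 1%N then n.-1 else 1%N.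
have c1 : t 0%N = n.+1 by [].
have c2 : forall j, (j < 2)%N -> (t j.+1 < t j)%N.
  by case => [|[|]] // _; rewrite /t /=; lia.
have c3 : (0 < t 2)%N by [].
have c4 : bits_ok r0 t 2.
  move=> i ir; rewrite bit_r0 /= orbF /t /=.
  by do ! (case: eqP => ?); rewrite //=; exfalso; lia.
have [H1 H2] := sigma_char c1 c2 c3 c4.
by rewrite H2 (H1 1%N) // (H1 2%N).
Qed.

Lemma L1_r0 : Lambda1 r0.
Proof.
have [w [s1 s2]] := sigma_r0.
apply/andP; split.
  apply/and3P; split.
  - by rewrite bit_r0; do ! (case: eqP => ?); rewrite //=; exfalso; lia.
  - by rewrite bit_r0.
  - apply/allP => i; rewrite mem_iota => ir; rewrite !bit_r0.
    by do ! (case: eqP => ?); rewrite //=; exfalso; lia.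
rewrite /weakly_increasing w; apply/allP => l; rewrite mem_iota => lr.
have -> : l = 1%N by lia.
rewrite s1 s2 sigma0; lia.
Qed.

Local Open Scope ring_scope.

Lemma key (F : {ffun 'I_n -> bool} -> R) (c : R) (h : nat -> R) :
  (0 < c)%R -> (forall i, (3 <= i <= n.-1)%N -> 0 < h i)%R ->
  (forall a b, (3 <= a <= b)%N -> (b <= n.-1)%N -> h b <= h a)%R ->
  (h n.-1 < h 3)%R ->
  (forall r, inDelta r -> F r = c * \prod_(1 <= j < weight r) h (sigma r j))%R ->
  (\sum_(r | Lambda1 r) F r < \sum_(r | Lambda2 r) F r)%R.
Proof.
move=> c0 hpos hmono hstr HF.
rewrite sum_L2; last exact: n1.
have pw : forall r, Lambda1 r -> F r <= F (revf r).
  move=> r /andP[D wi].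
  have [w E] := sigma_rev n1 D.
  rewrite HF // HF ?delta_rev //; last exact: n1.
  rewrite w ler_pM2l // [X in X <= _]big_nat_cond [X in _ <= X]big_nat_cond.
  apply: ler_prod => j /andP[/andP[j1 jk] _].
  rewrite E; last lia.
  have r1 := delta_range n1 D (j := j) ltac:(lia).
  have r2 := delta_range n1 D (j := (weight r - j)%N) ltac:(lia).
  have cc := concave n1 D wi (j := j) ltac:(lia).
  rewrite ltW ?hpos //=; apply: hmono; lia.
rewrite (bigD1 r0) ?L1_r0 //= [X in _ < X](bigD1 r0) ?L1_r0 //=.
apply: ltr_leD; last by apply: ler_sum => r /andP[/pw].
have [w [s1 s2]] := sigma_r0.
have D0 : inDelta r0 by case/andP: L1_r0.
have [w' E] := sigma_rev n1 D0.
rewrite HF // HF ?delta_rev //; last exact: n1.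
rewrite w' w !big_nat1 E; last by rewrite w.
rewrite w s1 ltr_pM2l //.
rewrite (_ : (n.+2 - n.-1)%N = 3%N) //; lia.
Qed.


Definition fM (p : nat -> R) i := (1 - p i) / (p i * p i.-1).

Lemma trans_split (p : nat -> R) i prev cur : p i != 0 -> ~~ (prev && cur) ->
  markov_trans p i prev cur =
  p i * ((if cur then (1 - p i) / p i else 1) * (if prev then (p i)^-1 else 1)).
Proof.
move=> pn; rewrite /markov_trans; case: prev; case: cur => //= _.
- by rewrite mul1r divff.
- by field.
- by rewrite !mulr1.
Qed.

Lemma markov_formula (p : nat -> R) r :
  (forall i, (3 <= i <= n)%N -> 0 < p i) -> p 2%N = 1 -> inDelta r ->
  markovP p r = (\prod_(3 <= i < n.+1) p i) / p n *
                \prod_(3 <= i < n.+1) (if bit r i then fM p i else 1).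
Proof.
move=> pp p2 D.
have pne : forall i, (2 <= i <= n)%N -> p i != 0.
  move=> i ir; have [->|i2] := eqVneq i 2%N; first by rewrite p2 oner_eq0.
  by rewrite gt_eqF // pp //; lia.
rewrite /markovP (delta_b2 n1 D) (delta_b1 D) /= !mulr1.
transitivity (\prod_(3 <= i < n.+1) (p i * ((if bit r i then (1 - p i) / p i else 1) *
   (if (if i.+1 == n.+1 then true else bit r i.+1) then (p i)^-1 else 1)))).
  apply: eq_big_nat => i ir; apply: trans_split; first by apply: pne; lia.
  case: eqP => [e|ne].
    by rewrite (_ : i = n); [rewrite (delta_bn D) andbF | lia].
  by have := delta_noadj D (i := i.+1) ltac:(lia).
rewrite big_split /= big_split /=.
have Hb : \prod_(3 <= i < n.+1)
    (if (if i.+1 == n.+1 then true else bit r i.+1) then (p i)^-1 else 1) =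
    (p n)^-1 * \prod_(3 <= i < n.+1) (if bit r i then (p i.-1)^-1 else 1).
  rewrite big_nat_recr /=; last lia.
  rewrite eqxx mulrC; congr (_ * _).
  rewrite [RHS]big_ltn; last lia.
  rewrite (_ : 3.-1 = 2%N) // p2 invr1 if_same mul1r [RHS]big_add1.
  apply: eq_big_nat => i ir.
  by rewrite eqSS (_ : (i == n) = false) //; apply/negbTE; rewrite neq_ltn; apply/orP; left; lia.
rewrite Hb [X in _ * X]mulrCA -big_split /= mulrA; congr (_ * _).
apply: eq_big_nat => i ir; case: (bit r i); last by rewrite mulr1.
rewrite /fM; have h1 := pne i ltac:(lia); have h2 := pne i.-1 ltac:(lia).
by field; apply/andP.
Qed.

Lemma xi_formula (th : R) r : 0 < th -> inDelta r ->
  xiP th r = (\prod_(2 <= i < n.+1) ((i%:R - 1) / (th + i%:R - 1))) *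
             \prod_(2 <= i < n.+1) (if bit r i then th / (i.-1)%:R else 1).
Proof.
move=> th0 D.
rewrite /xiP big_ltn; last lia.
rewrite (delta_b1 D) mulr1n addrK divff ?gt_eqF // mul1r.
rewrite -big_split; apply: eq_big_nat => i ir.
have e : (i%:R : R) = (i.-1)%:R + 1 by rewrite natr1 prednK //; lia.
have x0 : (0 : R) < (i.-1)%:R by rewrite ltr0n; lia.
rewrite e addrA !addrK.
case: (bit r i); last by apply/esym/mulr1.
have h1 : ((i.-1)%:R : R) != 0 by rewrite gt_eqF.
have h2 : th + (i.-1)%:R != 0 by rewrite gt_eqF // addr_gt0.
rewrite [RHS]/=; by field; apply/andP.
Qed.

End Real.

Local Open Scope ring_scope.

Theorem mainTheorem8 (n : nat) (hn : (5 <= n)%N) :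
  (forall (R : realType) (p : nat -> R),
     (forall i : nat, (3 <= i <= n)%N -> 0 < p i < 1) ->
     p 2%N = 1 ->
     (forall i : nat, (4 <= i <= n.-1)%N ->
        1 < p i * (1 - p i.-1) / (p (i - 2)%N * (1 - p i))) ->
     \sum_(r : {ffun 'I_n -> bool} | Lambda2 r) markovP p r >
     \sum_(r : {ffun 'I_n -> bool} | Lambda1 r) markovP p r)
  /\
  (forall (R : realType) (theta : R), 0 < theta ->
     \sum_(r : {ffun 'I_n -> bool} | Lambda2 r) etaP theta r >
       \sum_(r : {ffun 'I_n -> bool} | Lambda1 r) etaP theta r
     /\
     \sum_(r : {ffun 'I_n -> bool} | Lambda2 r) etaP theta r =
       \sum_(r : {ffun 'I_n -> bool} | Lambda1 r)
          (\prod_(1 <= i < weight r)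
             (((sigma r i).-1)%:R / (n.+1 - sigma r i)%:R))
          * etaP theta r).
Proof.
have n4 : (4 < n)%N by [].
split.
  move=> R p pp p2 hyp.
  have ppos : forall i, (3 <= i <= n)%N -> 0 < p i.
    by move=> i ir; case/andP: (pp i ir).
  have ppos2 : forall i, (2 <= i <= n)%N -> 0 < p i.
    move=> i ir; have [->|i2] := eqVneq i 2%N; first by rewrite p2 ltr01.
    by apply: ppos; lia.
  have plt1 : forall i, (3 <= i <= n)%N -> p i < 1.
    by move=> i ir; case/andP: (pp i ir).
  have adj : forall i, (4 <= i <= n.-1)%N -> fM p i < fM p i.-1.
    move=> i ir; have := hyp i ir.
    rewrite /fM (_ : i.-1.-1 = (i - 2)%N); last lia.
    have a0 := ppos i ltac:(lia); have a1 := plt1 i ltac:(lia).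
    have b0 := ppos i.-1 ltac:(lia); have b1 := plt1 i.-1 ltac:(lia).
    have c0 := ppos2 (i - 2)%N ltac:(lia).
    set a := p i; set b := p i.-1; set c := p (i - 2)%N => h.
    have d0 : 0 < c * (1 - a) by rewrite mulr_gt0 // subr_gt0.
    move: h; rewrite ltr_pdivlMr // mul1r => h.
    rewrite -subr_gt0.
    have -> : (1 - b) / (b * c) - (1 - a) / (a * b) = (a * (1 - b) - c * (1 - a)) / (a * b * c).
      by field; rewrite !gt_eqF.
    by rewrite divr_gt0 ?subr_gt0 // !mulr_gt0.
  have mono : forall a d, (3 <= a)%N -> (a + d <= n.-1)%N -> fM p (a + d) <= fM p a.
    move=> a; elim => [|d IH] a3 ad; first by rewrite addn0.
    apply: le_trans (IH a3 ltac:(lia)); rewrite addnS ltW //.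
    by have := adj (a + d).+1 ltac:(lia).
  apply: (@key R n n4 _ ((\prod_(3 <= i < n.+1) p i) / p n) (fM p)).
  - rewrite divr_gt0 ?ppos //; last lia.
    by rewrite big_nat_cond prodr_gt0 // => i /andP[/andP[i3 i4] _]; apply: ppos; lia.
  - move=> i ir; have h1 := ppos i ltac:(lia); have h2 := plt1 i ltac:(lia).
    have h3 := ppos2 i.-1 ltac:(lia).
    by rewrite /fM divr_gt0 ?subr_gt0 ?mulr_gt0.
  - move=> a b /andP[a3 ab] bn.
    by have := mono a (b - a)%N a3 ltac:(lia); rewrite subnKC.
  - have := mono 3%N (n.-1 - 4)%N isT ltac:(lia).
    rewrite (_ : (3 + (n.-1 - 4))%N = n.-2); last lia.
    move/lt_le_trans; apply; rewrite (_ : n.-1 = n.-2.+1); last lia.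
    by have := adj n.-2.+1 ltac:(lia).
  - move=> r D; rewrite (@markov_formula R n n4 p r ppos p2 D).
    by rewrite (@prod_bits R n n4 r (fM p) 3%N).
move=> R th th0.
pose g := fun i : nat => th / (i.-1)%:R.
have gpos : forall i, (2 <= i)%N -> 0 < g i.
  by move=> i i2; rewrite divr_gt0 // ltr0n; lia.
pose Dc := \prod_(2 <= i < n.+1) ((i%:R - 1) / (th + i%:R - 1) : R).
have Dpos : 0 < Dc.
  rewrite /Dc big_nat_cond prodr_gt0 // => i /andP[/andP[i2 _] _].
  have e : (i%:R : R) = (i.-1)%:R + 1 by rewrite natr1 prednK //; lia.
  have x0 : (0 : R) < (i.-1)%:R by rewrite ltr0n; lia.
  by rewrite e addrA !addrK divr_gt0 // addr_gt0.
have xipos : forall r : {ffun 'I_n -> bool}, inDelta r -> 0 < xiP th r.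
  move=> r D; rewrite (@xi_formula R n n4 th r th0 D); apply: mulr_gt0; first exact: Dpos.
  rewrite big_nat_cond prodr_gt0 // => i /andP[/andP[i2 _] _].
  by case: (bit r i) => //; apply: gpos.
pose Z := \sum_(s : {ffun 'I_n -> bool} | inDelta s) xiP th s.
have Zpos : 0 < Z.
  have D0 : inDelta (r0 n) by case/andP: (L1_r0 n4).
  rewrite /Z (bigD1 (r0 n)) //=.
  have h1 := xipos _ D0.
  have h2 : 0 <= \sum_(i | inDelta i && (i != r0 n)) xiP th i.
    by apply: sumr_ge0 => s /andP[D _]; apply/ltW/xipos.
  lra.
have HF : forall r : {ffun 'I_n -> bool}, inDelta r ->
    etaP th r = Dc / Z * \prod_(1 <= j < weight r) g (sigma r j).
  move=> r D; rewrite /etaP D (@xi_formula R n n4 th r th0 D).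
  rewrite (@prod_bits R n n4 r g 2%N) // -/Z -/Dc.
  by rewrite mulrAC.
split.
  apply: (@key R n n4 _ (Dc / Z) g); first by rewrite divr_gt0.
  - by move=> i ir; apply: gpos; lia.
  - move=> a b /andP[a3 ab] bn; rewrite /g ler_pM2l // lef_pV2 ?posrE ?ltr0n ?ler_nat; lia.
  - rewrite /g ltr_pM2l // ltf_pV2 ?posrE ?ltr0n ?ltr_nat; lia.
  - exact: HF.
rewrite sum_L2; last lia.
apply: eq_bigr => r /andP[D wi].
have [w E] := sigma_rev (ltac:(lia) : (1 < n)%N) D.
rewrite HF ?delta_rev //; last lia.
rewrite HF // w mulrCA; congr (_ * _).
rewrite -big_split /= [LHS]big_nat_rev /=.
apply: eq_big_nat => j jr.
rewrite E; last lia.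
rewrite (_ : (weight r - (1 + weight r - j.+1))%N = j); last lia.
have := delta_range (ltac:(lia) : (1 < n)%N) D (j := j) ltac:(lia) => sr.
rewrite /g (_ : (n.+2 - sigma r j).-1 = (n.+1 - sigma r j)%N); last lia.
have h1 : ((n.+1 - sigma r j)%N%:R : R) != 0 by rewrite pnatr_eq0 -lt0n; lia.
have h2 : (((sigma r j).-1)%:R : R) != 0 by rewrite pnatr_eq0 -lt0n; lia.
by field; apply/andP.
Qed.
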